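(* Let $n\ge 1$ and let $D$ be a diagram of $[n]^2$. Then the vertex set of the Schubitope $\mathcal{S}_D$ is \[\{x(w)\colon w\in S_n\},\] where, for $w\in S_n$, $x(w)=(x_1,\ldots,x_n)$ is the vector such that $x_k$ ($1\le k\le n$) is the number of appearances of the integer $k$ in the filling $\mathcal{F}_w(D)$.
   Context: $[n]=\{1,\ldots,n\}$. A diagram $D$ of $[n]^2$ is a set of boxes $(i,j)$ (row $i$, column $j$, rows numbered $1,\dots,n$ top to bottom, columns $1,\dots,n$ left to right) of the $n\times n$ grid. For $1\le j\le n$ and $S\subseteq[n]$, let $\mathrm{word}_{j,S}(D)$ be the string obtained by reading column $j$ from top to bottom and recording, for row $i$: ''('' if $(i,j)\notin D$ and $i\in S$; '')'' if $(i,j)\in D$ and $i\notin S$; ''$\star$'' if $(i,j)\in D$ and $i\in S$ (nothing otherwise). Let $\theta_D^j(S)$ be the number of matched pairs ''()'' in this string (standard parenthesis matching, ignoring $\star$'s) plus the number of $\star$'s, and $\theta_D(S)=\sum_{j=1}^n\theta_D^j(S)$. The Schubitope is $\mathcal{S}_D=\{x\in\mathbb{R}^n\colon \sum_{i\in[n]}x_i=\#D,\ \sum_{i\in S}x_i\le\theta_D(S)\text{ for all }S\subsetneq[n]\}$. For $w=w_1\cdots w_n\in S_n$, the filling $\mathcal{F}_w(D)$ is defined column by column: for each column $D_j=\{i\colon (i,j)\in D\}$, for $k=1,2,\ldots,n$ in turn, place $w_k$ into the topmost box of column $j$ of $D$ that is still empty and whose row index is $\ge w_k$; if no such box exists, $w_k$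 is skipped for this column. Boxes may remain empty. *)

(* Defs.v *)
(* Indices are 0-based: row/column/value k : 'I_n stands for k+1. *)
From mathcomp Require Import all_boot all_order all_algebra all_fingroup.
From mathcomp Require Import reals.
Set Implicit Arguments. Unset Strict Implicit. Unset Printing Implicit Defensive.
Import Order.TTheory GRing.Theory Num.Theory.
Local Open Scope ring_scope.

(* A diagram of [n]^2: a set of boxes (row, column). *)
Definition diagram (n : nat) := {set 'I_n * 'I_n}.

Inductive sym := Open | Close | Star.

Definition letter n (D : diagram n) (S : {set 'I_n}) (j i : 'I_n) : option sym :=
  match (i, j) \in D, i \in S with
  | false, true => Some Open
  | true, false => Some Close
  | true, true => Some Star
  | false, false => None
  end.

Definition word n (D : diagram n) (j : 'I_n) (S : {set 'I_n}) : seq sym :=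
  pmap (letter D S j) (enum 'I_n).

(* number of matched pairs "()" by standard matching, ignoring stars;
   [open] = number of currently unmatched "(" *)
Fixpoint matched_aux (open : nat) (w : seq sym) : nat :=
  match w with
  | [::] => 0
  | Open :: w' => matched_aux open.+1 w'
  | Close :: w' => if open is o.+1 then (matched_aux o w').+1 else matched_aux 0 w'
  | Star :: w' => matched_aux open w'
  end.

Definition matched (w : seq sym) : nat := matched_aux 0 w.

Definition nstars (w : seq sym) : nat :=
  count (fun s => if s is Star then true else false) w.

Definition theta_col n (D : diagram n) (j : 'I_n) (S : {set 'I_n}) : nat :=
  matched (word D j S) + nstars (word D j S).

Definition theta n (D : diagram n) (S : {set 'I_n}) : nat :=
  (\sum_(j < n) theta_col D j S)%N.

Definition schubitope (R : realType) n (D : diagram n) (x : 'rV[R]_n) : Prop :=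
  \sum_(i < n) x 0 i = (#|D|)%:R /\
  forall S : {set 'I_n}, S != setT -> \sum_(i in S) x 0 i <= (theta D S)%:R.

Definition is_vertex (R : realType) n (P : 'rV[R]_n -> Prop) (x : 'rV[R]_n) : Prop :=
  P x /\ forall (y z : 'rV[R]_n) (t : R), P y -> P z -> 0 < t -> t < 1 ->
    x = t *: y + (1 - t) *: z -> y = z.

(* Filling of a column: a partial map row -> value.  Placing value v:
   topmost (minimal row) empty box of column j of D with row >= v. *)
Definition fill_step n (D : diagram n) (j : 'I_n) (f : 'I_n -> option 'I_n) (v : 'I_n)
  : 'I_n -> option 'I_n :=
  match [seq i <- enum 'I_n | [&& (i, j) \in D, f i == None & (v <= i)%N] ] with
  | [::] => f
  | i0 :: _ => fun i => if i == i0 then Some v else f i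
  end.

(* F_w(D) restricted to column j: insert w_1, ..., w_n in turn *)
Definition filling_col n (D : diagram n) (w : 'S_n) (j : 'I_n) : 'I_n -> option 'I_n :=
  foldl (fill_step D j) (fun _ => None) [seq w k | k <- enum 'I_n].

Definition xw (R : realType) n (D : diagram n) (w : 'S_n) : 'rV[R]_n :=
  \row_(k < n) ((\sum_(j < n) #|[set i | filling_col D w j i == Some k]|)%N)%:R.

(* Main.v *)
Require Import Defs.
From mathcomp Require Import all_boot all_order all_algebra all_fingroup.
From mathcomp Require Import reals.
From mathcomp Require Import zify ring lra.
Set Implicit Arguments. Unset Strict Implicit. Unset Printing Implicit Defensive.


Section ListMatch.
Variables (T : Type) (L : T -> option sym).
Definition isO x := if L x is Some Open then true else false.
Definition isC x := if L x is Some Close then true else false.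
Definition isS x := if L x is Some Star then true else false.

Lemma list_matched (s : seq T) (o : nat) :
  (forall k, matched_aux o (pmap L s) <= o + count isO (take k s) + count isC (drop k s))
  /\ matched_aux o (pmap L s) <= count isC s
  /\ (matched_aux o (pmap L s) = count isC s \/ exists2 k, k <= size s &
     matched_aux o (pmap L s) = o + count isO (take k s) + count isC (drop k s)).
Proof.
elim: s o => [|x s IH] o.
  by split; [move=> k; rewrite /= | split; [|left]].
rewrite /isO /isC in IH *.
case E: (L x) => [[]|] /=.
-
  have [H1 [H2 H3]] := IH o.+1.
  split; [case=> [|k']/=|split]; rewrite /= ?E /=.
  + move: (H1 0); rewrite take0 drop0 /=; lia.
  + move: (H1 k'); lia.
  + by [].
  + case: H3 => [->|[k Hk ->]]; first by left.
    by right; exists k.+1 => //=; rewrite ?E /=; lia.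
-
  case: o => [|o].
  + have [H1 [H2 H3]] := IH 0.
    split; [case=> [|k']/=|split]; rewrite /= ?E /=.
    * lia.
    * move: (H1 k'); lia.
    * lia.
    * case: H3 => [->|[k Hk ->]]; first by right; exists 1 => //=; rewrite take0 drop0 ?E.
      by right; exists k.+1 => //=; rewrite ?E /=; lia.
  + have [H1 [H2 H3]] := IH o.
    split; [case=> [|k']/=|split]; rewrite /= ?E /=.
    * lia.
    * move: (H1 k'); lia.
    * lia.
    * case: H3 => [->|[k Hk ->]]; first by left.
      by right; exists k.+1 => //=; rewrite ?E /=; lia.
-
  have [H1 [H2 H3]] := IH o.
  split; [case=> [|k']/=|split]; rewrite /= ?E /=.
  + move: (H1 0); rewrite take0 drop0 /=; lia.
  + move: (H1 k'); lia.
  + by [].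
  + case: H3 => [->|[k Hk ->]]; first by left.
    by right; exists k.+1 => //=; rewrite ?E /=; lia.
- have [H1 [H2 H3]] := IH o.
  split; [case=> [|k']/=|split]; rewrite /= ?E /=.
  + move: (H1 0); rewrite take0 drop0 /=; lia.
  + move: (H1 k'); lia.
  + by [].
  + case: H3 => [->|[k Hk ->]]; first by left.
    by right; exists k.+1 => //=; rewrite ?E /=; lia.
Qed.

Lemma nstars_pmap s : nstars (pmap L s) = count isS s.
Proof. by elim: s => //= x s IH; rewrite /isS; case: (L x) => [[]|] //=; rewrite IH. Qed.
End ListMatch.


Lemma card_count (T : finType) (P : pred T) : #|[set x | P x]| = count P (enum T).
Proof.
rewrite cardsE cardE enumT -enumT /enum_mem size_filter.
rewrite count_filter; apply: eq_count => x; rewrite !inE andbT. by [].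
Qed.

Section Ord.
Variable n : nat.
Lemma mem_take_ord m (i : 'I_n) : (i \in take m (enum 'I_n)) = (i < m).
Proof. by rewrite in_take ?mem_enum // index_enum_ord. Qed.

Lemma mem_drop_ord m (i : 'I_n) : (i \in drop m (enum 'I_n)) = (m <= i).
Proof.
have : uniq (take m (enum 'I_n) ++ drop m (enum 'I_n)) by rewrite cat_take_drop enum_uniq.
rewrite cat_uniq => /and3P[_ H _].
have : i \in take m (enum 'I_n) ++ drop m (enum 'I_n) by rewrite cat_take_drop mem_enum.
rewrite mem_cat mem_take_ord.
case: (ltnP i m) => Him /= Hi.
  apply/negP => Hd; move/hasPn: H => /(_ i Hd) /negP; apply.
  by rewrite mem_take_ord Him.
by [].
Qed.

Lemma count_take_ord (P : pred 'I_n) m :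
  count P (take m (enum 'I_n)) = #|[set i | P i & i < m]|.
Proof.
rewrite card_count -[in RHS](cat_take_drop m (enum 'I_n)) count_cat.
rewrite [X in _ = X + _](eq_in_count (a2 := P)); last by move=> i; rewrite mem_take_ord => H /=; rewrite H andbT.
rewrite [X in _ = _ + X](eq_in_count (a2 := pred0)); last by move=> i; rewrite mem_drop_ord leqNgt => /negbTE H /=; rewrite H andbF.
by rewrite count_pred0 addn0.
Qed.

Lemma count_drop_ord (P : pred 'I_n) m :
  count P (drop m (enum 'I_n)) = #|[set i | P i & m <= i]|.
Proof.
rewrite card_count -[in RHS](cat_take_drop m (enum 'I_n)) count_cat.
rewrite [X in _ = X + _](eq_in_count (a2 := pred0)); last by move=> i; rewrite mem_take_ord => H /=; rewrite leqNgt H andbF.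
rewrite [X in _ = _ + X](eq_in_count (a2 := P)); last by move=> i; rewrite mem_drop_ord => H /=; rewrite H andbT.
by rewrite count_pred0 add0n.
Qed.
End Ord.

Section Col.
Variables (n : nat) (D : diagram n) (j : 'I_n) (S : {set 'I_n}).
Let L := letter D S j.

Lemma countS_split (l : seq 'I_n) : count (mem S) l = count (isO L) l + count (isS L) l.
Proof.
elim: l => //= i l ->; rewrite /isO /isS /L /letter.
by case: ((i, j) \in D); case: (i \in S) => /=; lia.
Qed.

Lemma countD_split (l : seq 'I_n) :
  count (fun i => (i, j) \in D) l = count (isC L) l + count (isS L) l.
Proof.
elim: l => //= i l ->; rewrite /isC /isS /L /letter.
by case: ((i, j) \in D); case: (i \in S) => /=; lia.
Qed.

Lemma theta_colE : theta_col D j S = matched_aux 0 (pmap L (enum 'I_n)) + count (isS L) (enum 'I_n).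
Proof. by rewrite /theta_col /word nstars_pmap. Qed.

Lemma theta_col_bound m :
  theta_col D j S <= #|[set i | i \in S & i < m]| + #|[set i | (i, j) \in D & m <= i]|.
Proof.
have [H1 _] := list_matched L (enum 'I_n) 0.
rewrite theta_colE -count_take_ord -count_drop_ord countS_split countD_split.
rewrite -(cat_take_drop m (enum 'I_n)) count_cat cat_take_drop.
move: (H1 m).
set a1 := count (isO L) (take m _); set a2 := count (isS L) (take m _).
set a3 := count (isC L) (drop m _); set a4 := count (isS L) (drop m _).
lia.
Qed.

Lemma theta_col_attain : exists2 m, m <= n &
  theta_col D j S = #|[set i | i \in S & i < m]| + #|[set i | (i, j) \in D & m <= i]|.
Proof.
have [_ [_ [H3|[k Hk H3]]]] := list_matched L (enum 'I_n) 0.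
  exists 0 => //.
  rewrite theta_colE -count_take_ord -count_drop_ord countS_split countD_split take0 drop0 /=.
  lia.
exists k; first by move: Hk; rewrite size_enum_ord.
rewrite theta_colE -count_take_ord -count_drop_ord countS_split countD_split.
rewrite -(cat_take_drop k (enum 'I_n)) count_cat cat_take_drop.
move: H3.
set a1 := count (isO L) (take k _); set a2 := count (isS L) (take k _).
set a3 := count (isC L) (drop k _); set a4 := count (isS L) (drop k _).
lia.
Qed.
End Col.


Lemma count_le2 (T : Type) (s : seq T) (a b c d : pred T) :
  (forall x, a x + b x <= c x + d x) -> count a s + count b s <= count c s + count d s.
Proof.
move=> H; elim: s => //= x s IH; move: (H x) IH.
case: (a x); case: (b x); case: (c x); case: (d x) => /=; lia.
Qed.

Section Theta.
Variables (n : nat) (D : diagram n).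

Lemma theta_col_submod j S T :
  theta_col D j (S :|: T) + theta_col D j (S :&: T) <= theta_col D j S + theta_col D j T.
Proof.
wlog: S T / exists m1, exists m2, [/\ m1 <= m2,
  theta_col D j S = #|[set i | i \in S & i < m1]| + #|[set i | (i, j) \in D & m1 <= i]| &
  theta_col D j T = #|[set i | i \in T & i < m2]| + #|[set i | (i, j) \in D & m2 <= i]|].
  move=> W.
  have [m1 _ E1] := theta_col_attain D j S.
  have [m2 _ E2] := theta_col_attain D j T.
  case: (leqP m1 m2) => Hm; first by apply: W; exists m1, m2.
  rewrite setUC setIC [X in _ <= X]addnC; apply: W; exists m2, m1; split => //; exact: ltnW.
case=> m1 [m2 [Hm E1 E2]].
apply: leq_trans (leq_add (theta_col_bound D j (S :|: T) m1) (theta_col_bound D j (S :&: T) m2)) _.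
rewrite E1 E2 !card_count.
have H : count (fun x : 'I_n => (x \in S :|: T) && (x < m1)) (enum 'I_n) +
  count (fun x : 'I_n => (x \in S :&: T) && (x < m2)) (enum 'I_n) <=
  count (fun x : 'I_n => (x \in S) && (x < m1)) (enum 'I_n) +
  count (fun x : 'I_n => (x \in T) && (x < m2)) (enum 'I_n).
  apply: count_le2 => x /=; rewrite in_setU in_setI.
  case: (x \in S); case: (x \in T) => //=; case: (ltnP x m1); case: (ltnP x m2) => //=; lia.
move: H.
set a1 := count (fun x : 'I_n => (x \in S :|: T) && (x < m1)) _.
set a2 := count (fun x : 'I_n => (x \in S :&: T) && (x < m2)) _.
set a3 := count (fun x : 'I_n => (x \in S) && (x < m1)) _.
set a4 := count (fun x : 'I_n => (x \in T) && (x < m2)) _.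
lia.
Qed.

Lemma theta_col0 j : theta_col D j set0 = 0.
Proof.
apply/eqP; rewrite -leqn0.
apply: leq_trans (theta_col_bound D j set0 n) _.
rewrite !card_count.
have H : count (fun x : 'I_n => (x \in set0) && (x < n)) (enum 'I_n) +
  count (fun x : 'I_n => ((x, j) \in D) && (n <= x)) (enum 'I_n) <=
  count pred0 (enum 'I_n) + count pred0 (enum 'I_n).
  apply: count_le2 => -[x hx] /=; rewrite in_set0 /= (leqNgt n x) hx andbF //.
by move: H; rewrite count_pred0.
Qed.

Lemma theta_colT j : theta_col D j setT = #|[set i | (i, j) \in D]|.
Proof.
apply/eqP; rewrite eqn_leq; apply/andP; split.
  apply: leq_trans (theta_col_bound D j setT 0) _.
  rewrite !card_count.
  have H : count (fun x : 'I_n => (x \in setT) && (x < 0)) (enum 'I_n) +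
    count (fun x : 'I_n => ((x, j) \in D) && (0 <= x)) (enum 'I_n) <=
    count (fun x : 'I_n => ((x, j) \in D)) (enum 'I_n) + count pred0 (enum 'I_n).
    by apply: count_le2 => x /=; rewrite andbF andbT addn0.
  by move: H; rewrite count_pred0 addn0.
have [m _ ->] := theta_col_attain D j setT.
rewrite !card_count.
have H : count (fun x : 'I_n => ((x, j) \in D)) (enum 'I_n) + count pred0 (enum 'I_n) <=
  count (fun x : 'I_n => (x \in setT) && (x < m)) (enum 'I_n) +
  count (fun x : 'I_n => ((x, j) \in D) && (m <= x)) (enum 'I_n).
  apply: count_le2 => x /=; rewrite in_setT /=; case: ((x, j) \in D); case: (ltnP x m) => //=.
by move: H; rewrite count_pred0 addn0.
Qed.

Lemma theta_submod S T :
  theta D (S :|: T) + theta D (S :&: T) <= theta D S + theta D T.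
Proof.
rewrite /theta -!big_split /=; apply: leq_sum => j _; exact: theta_col_submod.
Qed.

Lemma theta0 : theta D set0 = 0.
Proof. by rewrite /theta big1 // => j _; rewrite theta_col0. Qed.

Lemma cardD_cols : #|D| = \sum_(j < n) #|[set i | (i, j) \in D]|.
Proof.
transitivity (\sum_(j < n) \sum_(i < n) (if (i, j) \in D then 1 else 0)); last first.
  apply: eq_bigr => j _; rewrite -sum1_card [in RHS]big_mkcond /=; apply: eq_bigr => i _; by rewrite inE.
rewrite [in RHS]exchange_big [in RHS]pair_bigA -sum1_card big_mkcond /=.
by apply: eq_bigr => -[i j].
Qed.

Lemma thetaT : theta D setT = #|D|.
Proof. by rewrite cardD_cols /theta; apply: eq_bigr => j _; rewrite theta_colT. Qed.
End Theta.


Section Fill.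
Variables (n : nat) (D : diagram n) (j : 'I_n).
Notation step := (fill_step D j).

Lemma enum_ord_sorted : sorted (relpre val leq) (enum 'I_n).
Proof. by rewrite -sorted_map val_enum_ord iota_sorted. Qed.

Lemma step_spec (f : 'I_n -> option 'I_n) (v : 'I_n) :
  [/\ (forall i, f i != None -> step f v i = f i),
      (forall i, step f v i != f i -> [/\ f i = None, step f v i = Some v, (i, j) \in D & v <= i])
    , (forall e, (e, j) \in D -> v <= e -> f e = None -> exists2 i : 'I_n, i <= e & step f v i = Some v)
    & (forall i i', step f v i != f i -> step f v i' != f i' -> i = i')].
Proof.
rewrite /fill_step.
set l := [seq i <- enum 'I_n | _].
have Hl : forall i, (i \in l) = [&& (i, j) \in D, f i == None & v <= i].
  by move=> i; rewrite mem_filter mem_enum andbT.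
have Hs : sorted (relpre val leq) l.
  by apply: sorted_filter; [move=> a b c /= ; exact: leq_trans | exact: enum_ord_sorted].
case E: l Hl Hs => [|i0 l'] Hl Hs.
  split => //; first by move=> i; rewrite eqxx.
    move=> e De ve fe; move: (Hl e); by rewrite De fe ve.
  by move=> i i'; rewrite eqxx.
have Hi0 : [&& (i0, j) \in D, f i0 == None & v <= i0] by rewrite -Hl inE eqxx.
case/and3P: Hi0 => D0 /eqP f0 v0.
split.
- by move=> i fi; case: eqP => // ei; rewrite ei f0 in fi.
- move=> i; case: ifP => [/eqP ->|_]; last by rewrite eqxx.
  by move=> _; split.
- move=> e De ve fe; exists i0; last by rewrite eqxx.
  have : e \in i0 :: l' by rewrite Hl De fe ve eqxx.
  rewrite inE => /orP[/eqP -> //|He].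
  have Htr : transitive (relpre (@nat_of_ord n) leq) by move=> a b c /=; exact: leq_trans.
  have := order_path_min Htr Hs.
  by move/allP => /(_ e He).
- move=> i i'; case: ifP => [/eqP -> _|_]; last by rewrite eqxx.
  by case: ifP => [/eqP -> _|_]; last by rewrite eqxx.
Qed.

Definition Inv (u : seq 'I_n) (f : 'I_n -> option 'I_n) :=
 [/\ forall i v, f i = Some v -> [/\ (i, j) \in D, v <= i & v \in u],
     forall i i' v, f i = Some v -> f i' = Some v -> i = i'
   & forall v e, v \in u -> (e, j) \in D -> v <= e -> f e = None ->
       exists2 i : 'I_n, i <= e & f i = Some v].

Lemma Inv_step u f a : a \notin u -> Inv u f -> Inv (rcons u a) (step f a).
Proof.
move=> au [I1 I2 I3]; have [S1 S2 S3 S4] := step_spec f a.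
have Hc : forall i, step f a i = f i \/ [/\ f i = None, step f a i = Some a, (i, j) \in D & a <= i].
  by move=> i; case: (step f a i =P f i) => [->|/eqP/S2]; [left|right].
split.
- move=> i v; case: (Hc i) => [->|[_ -> Di ai]]; last by case=> <-; split; rewrite // mem_rcons mem_head.
  by move/I1 => [Di vi vu]; split; rewrite // mem_rcons inE vu orbT.
- move=> i i' v.
  case: (step f a i =P f i) => [->|/eqP Hi]; case: (step f a i' =P f i') => [->|/eqP Hi'].
  + exact: I2.
  + move=> fi; have [_ E _ _] := S2 _ Hi'; rewrite E => -[av]; subst v.
    by have [_ _ Hu] := I1 _ _ fi; rewrite Hu in au.
  + move=> + fi'; have [_ E _ _] := S2 _ Hi; rewrite E => -[av]; subst v.
    by have [_ _ Hu] := I1 _ _ fi'; rewrite Hu in au.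
  + by move=> _ _; exact: S4.
- move=> v e; rewrite mem_rcons inE => /orP[/eqP -> | vu] De ve.
    move=> se; apply: S3 => //.
    by case: (Hc e) => [<-|[]].
  move=> se.
  have fe : f e = None by case: (Hc e) => [<-|[]].
  have [i ie fi] := I3 v e vu De ve fe.
  by exists i => //; rewrite S1 // fi.
Qed.

Lemma Inv_fold u : uniq u -> Inv u (foldl step (fun _ => None) u).
Proof.
elim/last_ind: u => [|u a IH].
  by move=> _; split => //.
rewrite rcons_uniq => /andP[au uu]; rewrite foldl_rcons.
exact: Inv_step au (IH uu).
Qed.

Lemma fold_cont r f i v : v \notin r -> (foldl step f r i = Some v <-> f i = Some v).
Proof.
elim: r f => [|a r IH] f //=.
rewrite inE negb_or => /andP[va vr].
rewrite IH //.
have [S1 S2 _ _] := step_spec f a.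
case: (step f a i =P f i) => [->//|/eqP/S2 [-> -> _ _]].
split => // -[E]; by rewrite E eqxx in va.
Qed.

Definition oin (S : {set 'I_n}) (o : option 'I_n) := if o is Some k then k \in S else false.
Definition gc (f : 'I_n -> option 'I_n) S := #|[set i | oin S (f i)]|.

Lemma card_split (T : finType) (P Q : pred T) :
  #|[set x | P x]| = #|[set x | P x && Q x]| + #|[set x | P x && ~~ Q x]|.
Proof.
rewrite !card_count; elim: (enum T) => //= x s ->.
by case: (P x); case: (Q x) => /=; lia.
Qed.

Lemma card_split_ord (P : pred 'I_n) m :
  #|[set x | P x]| = #|[set x | P x & x < m]| + #|[set x | P x & m <= x]|.
Proof.
rewrite (card_split P (fun x : 'I_n => x < m)); congr (_ + _).
by apply: eq_card => x; rewrite !inE -leqNgt.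
Qed.

Lemma gc_bound u f S m : Inv u f ->
  gc f S <= #|[set i | i \in S & i < m]| + #|[set i | (i, j) \in D & m <= i]|.
Proof.
move=> [I1 I2 I3]; rewrite /gc (card_split_ord _ m); apply: leq_add.
  set A := [set x | oin S (f x) & x < m].
  pose g i := odflt i (f i).
  have inj : {in A &, injective g}.
    move=> i i'; rewrite !inE /g.
    case Ei: (f i) => [vi|] //; case Ei': (f i') => [vi'|] //= _ _ E.
    by apply: (I2 _ _ vi) => //; rewrite E.
  rewrite -(card_in_imset inj); apply: subset_leq_card; apply/subsetP => v /imsetP [i].
  rewrite !inE /g; case Ei: (f i) => [vi|] //= /andP[viS im] ->.
  have [_ vii _] := I1 _ _ Ei.
  by rewrite viS /=; apply: leq_ltn_trans vii im.
apply: subset_leq_card; apply/subsetP => i; rewrite !inE.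
case Ei: (f i) => [vi|] //= /andP[_ ->]; rewrite andbT.
by have [] := I1 _ _ Ei.
Qed.

Lemma gc_tight u f : Inv u f ->
  theta_col D j [set v | v \in u] <= #|[set i | f i != None]|.
Proof.
move=> [I1 I2 I3].
case: (pickP [pred e | ((e, j) \in D) && (f e == None)]) => [e0 He0 | Hnone].
  case: (@arg_maxnP _ e0 [pred e | ((e, j) \in D) && (f e == None)] val He0) => e.
  rewrite /= => /andP[De /eqP fe] Hmax.
  apply: leq_trans (theta_col_bound D j _ e.+1) _.
  rewrite [X in _ <= X](card_split_ord _ e.+1); apply: leq_add.
    pose g i := odflt i (f i).
    apply: leq_trans (leq_imset_card g _).
    apply: subset_leq_card; apply/subsetP => v; rewrite !inE => /andP[vu ve].
    have [i ie fi] := I3 v e vu De ve fe.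
    apply/imsetP; exists i; last by rewrite /g fi.
    by rewrite !inE fi /= ltnS ie.
  apply: subset_leq_card; apply/subsetP => i; rewrite !inE => /andP[Di ei].
  rewrite ei andbT; apply/negP => /eqP fi.
  by have := Hmax i; rewrite /= Di fi eqxx /= leqNgt ei => /(_ isT).
apply: leq_trans (theta_col_bound D j _ 0) _.
have -> : #|[set i | i \in [set v | v \in u] & i < 0]| = 0.
  by apply: eq_card0 => x; rewrite !inE ltn0 andbF.
rewrite add0n.
apply: subset_leq_card; apply/subsetP => i; rewrite !inE andbT => Di.
by apply/negP => /eqP fi; move: (Hnone i); rewrite /= Di fi eqxx.
Qed.
End Fill.


Section W.
Variables (n : nat) (D : diagram n) (w : 'S_n).

Definition vs := [seq w k | k <- enum 'I_n].
Definition pref t := [set v | ((w^-1)%g v < t)%N].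

Lemma uniq_vs : uniq vs.
Proof. by rewrite map_inj_uniq ?enum_uniq //; exact: perm_inj. Qed.

Lemma mem_take_vs t v : (v \in take t vs) = (v \in pref t).
Proof.
rewrite inE /vs -map_take -[v in LHS](permKV w) mem_map; last exact: perm_inj.
by rewrite mem_take_ord.
Qed.

Lemma col_le j S : gc (filling_col D w j) S <= theta_col D j S.
Proof.
have Hinv := Inv_fold D j uniq_vs.
have [m _ ->] := theta_col_attain D j S.
exact: gc_bound Hinv.
Qed.

Lemma col_pref j t : gc (filling_col D w j) (pref t) = theta_col D j (pref t).
Proof.
apply/eqP; rewrite eqn_leq col_le /=.
set ft := foldl (fill_step D j) (fun _ => None) (take t vs).
have Hinv : Inv D j (take t vs) ft by apply: Inv_fold; rewrite take_uniq // uniq_vs.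
have Hu := uniq_vs; rewrite -(cat_take_drop t vs) cat_uniq in Hu.
case/and3P: Hu => _ Hdisj _.
have Hfin : filling_col D w j = foldl (fill_step D j) ft (drop t vs).
  by rewrite /filling_col -foldl_cat cat_take_drop.
have -> : pref t = [set v | v \in take t vs].
  by apply/setP => v; rewrite !inE mem_take_vs inE.
apply: leq_trans (gc_tight Hinv) _.
rewrite /gc Hfin; apply: eq_leq; apply: eq_card => i; rewrite !inE.
case: Hinv => I1 _ _.
have nd : forall v, v \in take t vs -> v \notin drop t vs.
  by move=> v vt; apply/negP => vd; move/hasP: Hdisj; apply; exists v.
case Ei: (ft i) => [v|] /=.
  have [_ _ vt] := I1 _ _ Ei.
  have -> : foldl (fill_step D j) ft (drop t vs) i = Some v.
    by apply/(fold_cont D j ft i (nd _ vt)).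
  by rewrite /= inE vt.
case Ef: (foldl _ ft _ i) => [v|] //; rewrite /oin inE.
symmetry; apply/negbTE/negP => vt.
by have := (fold_cont D j ft i (nd _ vt)).1 Ef; rewrite Ei.
Qed.

Lemma pref_setT : pref n = setT.
Proof. by apply/setP => v; rewrite !inE ltn_ord. Qed.

End W.

Lemma sum_eq_card n (f : 'I_n -> option 'I_n) (S : {set 'I_n}) :
  \sum_(k in S) #|[set i | f i == Some k]| = gc f S.
Proof.
transitivity (\sum_(k in S) \sum_(i < n) ((f i == Some k) : nat)).
  apply: eq_bigr => k _; rewrite -sum1_card big_mkcond /=.
  by apply: eq_bigr => i _; rewrite inE; case: (f i == Some k).
rewrite exchange_big /gc -sum1_card [in RHS]big_mkcond /=.
apply: eq_bigr => i _; rewrite inE.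
case: (f i) => [v|] /=; last by rewrite big1.
case: (boolP (v \in S)) => vS.
  rewrite (bigD1 v) //= eqxx big1 // => k /andP[_ kv].
  by case: eqP => // -[E]; rewrite E eqxx in kv.
rewrite big1 // => k kS; case: eqP => // -[E]; by rewrite E kS in vS.
Qed.

Import Order.TTheory GRing.Theory Num.Theory.
Local Open Scope ring_scope.


Section RR.
Variables (R : realType) (n : nat) (D : diagram n).

Definition xs (x : 'rV[R]_n) (S : {set 'I_n}) := \sum_(i in S) x 0 i.
Definition PP (x : 'rV[R]_n) :=
  (forall S, xs x S <= (theta D S)%:R) /\ xs x setT = (theta D setT)%:R.

Lemma xs_setT x : xs x setT = \sum_(i < n) x 0 i.
Proof. by apply: eq_bigl => i; rewrite in_setT. Qed.

Lemma schubE x : schubitope D x <-> PP x.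
Proof.
rewrite /schubitope /PP -xs_setT thetaT; split.
  move=> [H1 H2]; split => // S; case: (eqVneq S setT) => [->|/H2 //].
  by rewrite thetaT H1.
by move=> [H1 H2]; split => // S _; exact: H1.
Qed.

Lemma xw_xs w S : xs (xw R D w) S = (\sum_(j < n) gc (filling_col D w j) S)%:R.
Proof.
rewrite /xs; under eq_bigr => k _ do rewrite mxE.
rewrite -natr_sum exchange_big /=; congr (_%:R).
by apply: eq_bigr => j _; exact: sum_eq_card.
Qed.

Lemma xw_le w S : xs (xw R D w) S <= (theta D S)%:R.
Proof. by rewrite xw_xs ler_nat; apply: leq_sum => j _; exact: col_le. Qed.

Lemma xw_pref w t : xs (xw R D w) (pref w t) = (theta D (pref w t))%:R.
Proof. by rewrite xw_xs; congr (_%:R); apply: eq_bigr => j _; exact: col_pref. Qed.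

Lemma xw_PP w : PP (xw R D w).
Proof. by split; [exact: xw_le | rewrite -(pref_setT w) xw_pref]. Qed.

Lemma xs_pref_step x w (i : 'I_n) : xs x (pref w i.+1) = xs x (pref w i) + x 0 (w i).
Proof.
have -> : pref w i.+1 = w i |: pref w i.
  apply/setP => v; rewrite !inE ltnS leq_eqVlt; congr (_ || _).
  apply/eqP/eqP => [E|->]; last by rewrite permK.
  by rewrite -[v](permKV w); congr (w _); apply: val_inj.
rewrite /xs big_setU1 /=; first by rewrite addrC.
by rewrite inE permK ltnn.
Qed.

Lemma xs_determ w (y z : 'rV[R]_n) :
  (forall t, xs y (pref w t) = xs z (pref w t)) -> y = z.
Proof.
move=> H; apply/rowP => k.
have := xs_pref_step y w ((w^-1)%g k); have := xs_pref_step z w ((w^-1)%g k).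
by rewrite permKV !H => -> /addrI ->.
Qed.

Lemma xs_lin (y z : 'rV[R]_n) (t : R) S :
  xs (t *: y + (1 - t) *: z) S = t * xs y S + (1 - t) * xs z S.
Proof.
rewrite /xs !mulr_sumr -big_split /=; apply: eq_bigr => i _.
by rewrite mxE [(t *: y) 0 i]mxE [((1 - t) *: z) 0 i]mxE.
Qed.

Lemma xw_vertex w : is_vertex (schubitope D) (xw R D w).
Proof.
split; first by apply/schubE; exact: xw_PP.
move=> y z t /schubE [Hy _] /schubE [Hz _] t0 t1 E.
apply: (@xs_determ w) => s.
have Hx := xw_pref w s.
have := xs_lin y z t (pref w s); rewrite -E Hx.
have := Hy (pref w s); have := Hz (pref w s).
set T := (theta D (pref w s))%:R; set a := xs y _; set b := xs z _.
move=> hb ha hE.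
have h1 : 0 <= t * (T - a) by apply: mulr_ge0; lra.
have h2 : 0 <= (1 - t) * (T - b) by apply: mulr_ge0; lra.
have h3 : t * (T - a) + (1 - t) * (T - b) = 0.
  by rewrite !mulrBr hE; ring.
have h4 : t * (T - a) = 0 by lra.
have h5 : (1 - t) * (T - b) = 0 by lra.
move/eqP: h4; rewrite mulf_eq0 => /orP[/eqP|/eqP]; first by lra.
move/eqP: h5; rewrite mulf_eq0 => /orP[/eqP|/eqP]; first by lra.
lra.
Qed.

End RR.


Lemma exists_eps (R : realType) (T : finType) (P : pred T) (F : T -> R) :
  (forall S, P S -> 0 < F S) -> exists2 e : R, 0 < e & forall S, P S -> e <= F S.
Proof.
move=> H.
suff: forall s : seq T, exists2 e : R, 0 < e & forall S, S \in s -> P S -> e <= F S.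
  by case/(_ (enum T)) => e e0 He; exists e => // S; apply: He; rewrite mem_enum.
elim=> [|x s [e e0 He]]; first by exists 1.
case: (boolP (P x)) => Px.
  exists (Order.min e (F x)); first by rewrite lt_min e0 H.
  move=> S; rewrite inE => /orP[/eqP ->|Ss] PS; rewrite ge_min ?lexx ?orbT //.
  by rewrite He.
exists e => // S; rewrite inE => /orP[/eqP ->|Ss] PS; first by rewrite PS in Px.
exact: He.
Qed.

Section Ext.
Variables (R : realType) (n : nat) (D : diagram n) (x : 'rV[R]_n).
Hypothesis Px : PP D x.

Definition tight S := xs x S == (theta D S)%:R.

Lemma xs_UI (y : 'rV[R]_n) S T : xs y (S :|: T) + xs y (S :&: T) = xs y S + xs y T.
Proof.
rewrite /xs !(big_mkcond (fun i => i \in _)) -!big_split; apply: eq_bigr => i _.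
rewrite in_setU in_setI; case: (i \in S); case: (i \in T); rewrite /= ?addr0 ?add0r //.
Qed.

Lemma tightU S T : tight S -> tight T -> tight (S :|: T) /\ tight (S :&: T).
Proof.
move=> /eqP tS /eqP tT.
have := theta_submod D S T; rewrite -(ler_nat R) !natrD.
have := xs_UI x S T; have [H _] := Px; have := H (S :|: T); have := H (S :&: T).
rewrite tS tT => h1 h2 h3 h4.
by split; apply/eqP; lra.
Qed.

Lemma tight0 : tight set0.
Proof. by rewrite /tight /xs big_set0 theta0. Qed.

Lemma tightT : tight setT.
Proof. by rewrite /tight; case: Px => _ ->. Qed.

Lemma sum_delta (S : {set 'I_n}) a : \sum_(i in S) ((i == a)%:R : R) = (a \in S)%:R.
Proof.
case: (boolP (a \in S)) => Ha.
  rewrite (bigD1 a) //= eqxx big1 ?addr0 // => i /andP[_ /negbTE ->] //.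
by rewrite big1 // => i iS; case: eqP => // E; rewrite -E iS in Ha.
Qed.


Lemma separation : is_vertex (schubitope D) x ->
  forall a b : 'I_n, a != b -> exists2 S, tight S & (a \in S) != (b \in S).
Proof.
move=> [_ Hext] a b ab.
case: (boolP [exists S, tight S && ((a \in S) != (b \in S))]).
  by case/existsP => S /andP[H1 H2]; exists S.
move=> Hn; exfalso.
have Hsep : forall S, tight S -> (a \in S) = (b \in S).
  move=> S tS; move/existsPn: Hn => /(_ S); rewrite tS /=.
  by move/negPn/eqP.
have [H _] := Px.
have [eps e0 He] := @exists_eps R _ (fun S => ~~ tight S) (fun S => (theta D S)%:R - xs x S)
  (fun S tS => ltac:(rewrite subr_gt0 lt_neqAle H andbT; move: tS; rewrite /tight eq_sym //)).
pose d : 'rV[R]_n := \row_k ((k == a)%:R - (k == b)%:R).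
have xsd : forall c S, xs (x + c *: d) S = xs x S + c * ((a \in S)%:R - (b \in S)%:R).
  move=> c S; rewrite /xs -sum_delta -sum_delta -sumrB mulr_sumr -big_split /=.
  by apply: eq_bigr => i _; rewrite !mxE.
have Pc : forall c, - eps <= c -> c <= eps -> schubitope D (x + c *: d).
  move=> c c1 c2; apply/schubE; split.
    move=> S; rewrite xsd; case: (boolP (tight S)) => tS.
      by rewrite (Hsep S tS) subrr mulr0 addr0; move/eqP: tS => ->.
    have := He S tS; case: (a \in S); case: (b \in S) => /=; lra.
  by rewrite xsd !in_setT subrr mulr0 addr0; case: Px.
have P1 : schubitope D (x + eps *: d) by apply: Pc; lra.
have P2 : schubitope D (x + (- eps) *: d) by apply: Pc; lra.
have h2 : (0 : R) < 2^-1 by rewrite invr_gt0.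
have h3 : (2^-1 : R) < 1 by rewrite invf_lt1 // ltr1n.
have Ex : x = 2^-1 *: (x + eps *: d) + (1 - 2^-1) *: (x + - eps *: d).
  apply/rowP => k; rewrite !mxE.
  set u := x 0 k; set v := _ - _; by field.
have := Hext _ _ _ P1 P2 h2 h3 Ex.
move/(congr1 (fun m : 'rV[R]_n => m 0 a)); rewrite !mxE eqxx (negbTE ab) /=.
lra.
Qed.

Lemma ext_xw (hn : (0 < n)%N) : is_vertex (schubitope D) x ->
  exists w : 'S_n, x = xw R D w.
Proof.
move=> Hv; have Hsep := separation Hv.
pose M (k : 'I_n) := \bigcap_(S | tight S && (k \in S)) S.
have tightM : forall k, tight (M k).
  move=> k; apply: (big_ind (fun A => tight A)) => //; first exact: tightT.
    by move=> A B tA tB; case: (tightU tA tB).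
  by move=> S /andP[].
have inM : forall k, k \in M k by move=> k; apply/bigcapP => S /andP[_ ->].
have subM : forall k S, tight S -> k \in S -> M k \subset S.
  by move=> k S tS kS; apply: bigcap_inf; rewrite tS kS.
have Mlt : forall a b, a != b -> a \in M b -> (#|M a| < #|M b|)%N.
  move=> a b ab aMb; apply: proper_card; apply/properP; split.
    exact: subM (tightM b) aMb.
  exists b; first exact: inM.
  have [S tS H] := Hsep a b ab.
  have [[aS bS]|[aS bS]] : (a \in S /\ b \notin S) \/ (a \notin S /\ b \in S).
    by move: H; case: (a \in S); case: (b \in S); auto.
    by apply/negP => bMa; move/subsetP: (subM a S tS aS) => /(_ b bMa); rewrite (negbTE bS).
  exfalso.
  by move/subsetP: (subM b S tS bS) => /(_ a aMb); rewrite (negbTE aS).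
pose r := fun a b : 'I_n => (#|M a| <= #|M b|)%N.
pose s := sort r (enum 'I_n).
have ss : sorted r s by apply: sort_sorted => a b; exact: leq_total.
have ps : perm_eq s (enum 'I_n) by rewrite perm_sort.
have size_s : size s = n by rewrite (perm_size ps) size_enum_ord.
have uniq_s : uniq s by rewrite (perm_uniq ps) enum_uniq.
pose x0 : 'I_n := Ordinal hn.
pose f := fun i : 'I_n => nth x0 s i.
have finj : injective f.
  move=> i i' /eqP; rewrite /f nth_uniq ?size_s ?ltn_ord // => /eqP; exact: val_inj.
pose w := perm finj.
have wE : forall i, w i = nth x0 s i by move=> i; rewrite permE.
exists w.
apply: (@xs_determ R n w) => t; rewrite xw_pref.
apply/eqP.
suff -> : pref w t = \bigcup_(b in pref w t) M b.
  apply: (big_ind (fun A => tight A)) => //; first exact: tight0.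
  by move=> A B tA tB; case: (tightU tA tB).
apply/setP => v; apply/idP/idP => [vt|].
  by apply/bigcupP; exists v => //; exact: inM.
case/bigcupP => b bt vMb.
case: (eqVneq v b) => [-> //|vb].
have lt := Mlt v b vb vMb.
rewrite inE; rewrite inE in bt; rewrite ltnNge; apply/negP => tv.
have Hle : ((w^-1)%g b <= (w^-1)%g v)%N by apply: leq_trans (ltnW bt) tv.
have tr : transitive r by move=> y1 y2 y3; rewrite /r; exact: leq_trans.
have rf : reflexive r by move=> y1; rewrite /r.
have Hr := sorted_leq_nth tr rf x0 ss.
have := Hr (val ((w^-1)%g b)) (val ((w^-1)%g v)).
rewrite !inE size_s !ltn_ord => /(_ isT isT Hle).
rewrite -!wE !permKV /r.
by rewrite leqNgt lt.
Qed.
End Ext.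


Unset Implicit Arguments.

Theorem theorem1p1 (R : realType) (n : nat) (hn : (0 < n)%N) (D : diagram n) :
  forall x : 'rV[R]_n,
    is_vertex (schubitope D) x <-> exists w : 'S_n, x = xw R D w.
Proof.
move=> x; split.
  move=> Hv; have Px : PP D x by apply/schubE; case: Hv.
  exact: (ext_xw Px hn Hv).
by case=> w ->; exact: xw_vertex.
Qed.
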